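(* For every integer $m\ge 0$ and all integers $n,k$ with $0\le n,k<3\cdot 2^m$, $$\binom{n+3\cdot 2^m}{k}_F\equiv \binom{n}{k}_F \pmod 2.$$
   Context: The Fibonacci numbers are defined by $F_0=0$, $F_1=1$, $F_n=F_{n-1}+F_{n-2}$ for $n\ge 2$. For $n\ge 0$ let $n!_F=F_1F_2\cdots F_n$ (with $0!_F=1$), and for $0\le k\le n$ define the Fibonomial coefficient $\binom{n}{k}_F=\dfrac{n!_F}{k!_F\,(n-k)!_F}$; by convention $\binom{n}{k}_F=0$ if $k<0$ or $k>n$. *)

(* Defs.v *)
From mathcomp Require Import all_boot.
Set Implicit Arguments. Unset Strict Implicit. Unset Printing Implicit Defensive.

Fixpoint fib (n : nat) : nat :=
  match n with
  | 0 => 0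
  | 1 => 1
  | (m.+1 as p).+1 => fib p + fib m
  end.

Definition fibfact (n : nat) : nat := \prod_(1 <= i < n.+1) fib i.

(* Fibonomial coefficient: n!_F / (k!_F (n-k)!_F) for 0 <= k <= n, else 0.
   (The quotient is exact: Fibonomials are integers.) *)
Definition fibonomial (n k : nat) : nat :=
  if k <= n then fibfact n %/ (fibfact k * fibfact (n - k)) else 0.

(* Main.v *)
Require Import Defs.
From mathcomp Require Import all_boot zify.

Lemma fibSS n : fib n.+2 = fib n.+1 + fib n. Proof. by []. Qed.

Lemma fibD a b : fib (a + b).+1 = fib a.+1 * fib b.+1 + fib a * fib b.
Proof.
elim: a b => [|a IH] b; first by rewrite add0n mul1n mul0n addn0.
rewrite addSnnS IH !fibSS. nia.
Qed.

Lemma fib_odd i : odd (fib i) = (i %% 3 != 0).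
Proof.
suff H : odd (fib i) = (i %% 3 != 0) /\ odd (fib i.+1) = (i.+1 %% 3 != 0) by case: H.
elim: i => [|i [IH1 IH2]]; first by [].
split=> //. rewrite fibSS oddD IH1 IH2.
have := ltn_pmod i (isT : 0 < 3).
have E1 : i.+1 %% 3 = (i %% 3).+1 %% 3 by rewrite -addn1 -modnDml addn1.
have E2 : i.+2 %% 3 = (i %% 3).+2 %% 3 by rewrite -addn2 -modnDml addn2.
rewrite E1 E2. by case: (i %% 3) => [|[|[|]]].
Qed.

Lemma fib_gt0 i : 0 < fib i.+1.
Proof.
suff H : 0 < fib i.+1 /\ 0 < fib i.+2 by case: H.
elim: i => [|i [IH1 IH2]]; first by [].
by split=> //; rewrite fibSS addn_gt0 IH2.
Qed.

Lemma fibfact0 : fibfact 0 = 1. Proof. by rewrite /fibfact big_geq. Qed.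
Lemma fibfactS n : fibfact n.+1 = fibfact n * fib n.+1.
Proof. by rewrite /fibfact big_nat_recr. Qed.
Lemma fibfact_gt0 n : 0 < fibfact n.
Proof. elim: n => [|n IH]; first by rewrite fibfact0. by rewrite fibfactS muln_gt0 IH fib_gt0. Qed.

Fixpoint C n k := match n, k with
| _, 0 => 1
| 0, _.+1 => 0
| n'.+1, k'.+1 => fib (n' - k').+1 * C n' k' + fib k' * C n' k'.+1 end.

Lemma C_SS n k : C n.+1 k.+1 = fib (n - k).+1 * C n k + fib k * C n k.+1.
Proof. by []. Qed.

Lemma C_small n k : n < k -> C n k = 0.
Proof.
elim: n k => [|n IH] [|k] //= H.
by rewrite !IH ?muln0 // ltnW.
Qed.

Lemma C_fact n k : k <= n -> C n k * (fibfact k * fibfact (n - k)) = fibfact n.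
Proof.
elim: n k => [|n IH] [|k] //; rewrite ?fibfact0 ?muln1 ?mul1n ?subn0 // => Hk.
rewrite C_SS subSS.
rewrite ltnS in Hk.
case: (ltngtP k n) => [Hlt|Hgt|->]; [|by move: Hk; rewrite leqNgt Hgt|].
2:{
  rewrite (@C_small n n.+1) // subnn muln0 addn0 mul1n fibfact0 muln1 fibfactS mulnA.
  by have := IH n (leqnn n); rewrite subnn fibfact0 muln1 => ->. }
have IH1 := IH k (ltnW Hlt). have IH2 := IH k.+1 Hlt.
move: IH1 IH2; have -> : n - k = (n - k.+1).+1 by lia.
set a := n - k.+1 => IH1 IH2.
move: IH1; rewrite (fibfactS a) => IH1.
rewrite !fibfactS.
have -> : (fib a.+2 * C n k + fib k * C n k.+1) * (fibfact k * fib k.+1 * (fibfact a * fib a.+1))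
  = fib a.+2 * fib k.+1 * (C n k * (fibfact k * (fibfact a * fib a.+1)))
    + fib k * fib a.+1 * (C n k.+1 * (fibfact k * fib k.+1 * fibfact a)) by nia.
rewrite IH1 -(fibfactS k) IH2 -mulnDl mulnC.
congr (_ * _).
have -> : n = a.+1 + k by rewrite /a; lia.
by rewrite fibD [fib k * _]mulnC.
Qed.

Lemma fibonomialE n k : fibonomial n k = C n k.
Proof.
rewrite /fibonomial; case: leqP => H; last by rewrite C_small.
by rewrite -{1}(@C_fact n k H) mulnK // muln_gt0 !fibfact_gt0.
Qed.

Definition h n k := (k %% 2 <= n %% 2) && odd 'C(n %/ 2, k %/ 2).

Lemma hE a b r s : r < 2 -> s < 2 -> h (a*2 + r) (b*2 + s) = (s <= r) && odd 'C(a, b).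
Proof.
move=> Hr Hs; by rewrite /h !modnMDl !divnMDl // !modn_small // !divn_small // !addn0.
Qed.

Lemma bin_odd n k : odd 'C(n, k) = h n k.
Proof.
elim: n k => [|n IH] k.
  rewrite bin0n /h mod0n div0n bin0n.
  case: k => [|k] //=. case: (k.+1 %% 2 =P 0) => [E|E]; last by rewrite leqn0; move/eqP: E => /negbTE ->.
  rewrite E /=. apply/esym/negbTE. apply/eqP. lia.
case: k => [|k]; first by rewrite bin0 /h mod0n div0n bin0.
rewrite binS oddD !IH.
have [b [s [Hs ->]]] : exists b s, s < 2 /\ k = b * 2 + s.
  by exists (k %/ 2), (k %% 2); rewrite ltn_pmod // -divn_eq.
have [a [r [Hr ->]]] : exists a r, r < 2 /\ n = a * 2 + r.
  by exists (n %/ 2), (n %% 2); rewrite ltn_pmod // -divn_eq.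
have T : forall x, x * 2 + 2 = x.+1 * 2 + 0 by move=> x; lia.
move: Hr Hs; case: r => [|[|r]] //; case: s => [|[|s]] // _ _;
  rewrite -?addnS ?T !hE //= ?andbF ?andbT ?binS ?oddD ?addbF ?addbb //.
Qed.

Lemma lucas j a b : a < 2 ^ j -> b < 2 ^ j -> odd 'C(a + 2 ^ j, b) = odd 'C(a, b).
Proof.
elim: j a b => [|j IH] a b.
  rewrite expn0 => Ha Hb; have -> : a = 0 by lia.
  by have -> : b = 0 by lia.
move=> Ha Hb.
have [b' [s [Hs E]]] : exists x y, y < 2 /\ b = x * 2 + y.
  by exists (b %/ 2), (b %% 2); rewrite ltn_pmod // -divn_eq.
have [a' [r [Hr E']]] : exists x y, y < 2 /\ a = x * 2 + y.
  by exists (a %/ 2), (a %% 2); rewrite ltn_pmod // -divn_eq.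
have -> : a + 2 ^ j.+1 = (a' + 2 ^ j) * 2 + r by rewrite E' expnSr; lia.
rewrite E E' !bin_odd !hE // IH //.
  move: Ha; rewrite E' expnSr; lia.
move: Hb; rewrite E expnSr; lia.
Qed.

Definition g n k := [&& k %% 6 <= n %% 6, k %% 3 <= n %% 3 & odd 'C(n %/ 6, k %/ 6)].

Lemma m3 a c : (a * 6 + c) %% 3 = c %% 3.
Proof. by rewrite -[6]/(2*3) mulnA modnMDl. Qed.

Lemma gE a b r s : r < 6 -> s < 6 ->
  g (a*6 + r) (b*6 + s) = [&& s <= r, s %% 3 <= r %% 3 & odd 'C(a, b)].
Proof.
move=> Hr Hs; by rewrite /g !m3 !modnMDl !divnMDl // !(@modn_small _ 6) // !(@divn_small _ 6) // !addn0.
Qed.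

Lemma g_rec n k : k <= n ->
  g n.+1 k.+1 = (((n-k).+1 %% 3 != 0) && g n k) (+) ((k %% 3 != 0) && g n k.+1).
Proof.
move=> Hkn.
have -> : ((n-k).+1 %% 3 != 0) = (n.+1 %% 3 != k %% 3).
  by apply/idP/idP => /eqP H; apply/eqP; lia.
clear Hkn.
have [b [s [Hs ->]]] : exists x y, y < 6 /\ k = x * 6 + y.
  by exists (k %/ 6), (k %% 6); rewrite ltn_pmod // -divn_eq.
have [a [r [Hr ->]]] : exists x y, y < 6 /\ n = x * 6 + y.
  by exists (n %/ 6), (n %% 6); rewrite ltn_pmod // -divn_eq.
have T : forall x, x * 6 + 6 = x.+1 * 6 + 0 by move=> x; lia.
move: Hr Hs; case: r => [|[|[|[|[|[|r]]]]]] //; case: s => [|[|[|[|[|[|s]]]]]] // _ _;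
  rewrite -?addnS ?T !gE // !m3 /= ?binS ?oddD;
  by case: (odd 'C(a, b)); case: (odd 'C(a, b.+1)).
Qed.

Lemma g_small n k : n < k -> g n k = false.
Proof.
move=> H.
have [b [s [Hs E]]] : exists x y, y < 6 /\ k = x * 6 + y.
  by exists (k %/ 6), (k %% 6); rewrite ltn_pmod // -divn_eq.
have [a [r [Hr E']]] : exists x y, y < 6 /\ n = x * 6 + y.
  by exists (n %/ 6), (n %% 6); rewrite ltn_pmod // -divn_eq.
rewrite E E' gE //.
case: (ltnP a b) => H'; first by rewrite bin_small // !andbF.
have -> : (s <= r) = false by apply/negbTE; rewrite -ltnNge; lia.
by [].
Qed.

Lemma C_odd n k : odd (C n k) = g n k.
Proof.
elim: n k => [|n IH] [|k].
- by [].
- by rewrite g_small.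
- by rewrite /g mod0n div0n bin0 /= ?leq_mod // andbT; apply/esym/idP; apply: leq_trans (leq_pmod _ _) _.
rewrite C_SS oddD !oddM !fib_odd !IH.
case: (leqP k n) => H; first by rewrite g_rec.
rewrite !g_small ?andbF //; lia.
Qed.

Theorem mainTheorem1 (m n k : nat) :
  n < 3 * 2 ^ m -> k < 3 * 2 ^ m ->
  fibonomial (n + 3 * 2 ^ m) k = fibonomial n k %[mod 2].
Proof.
rewrite !fibonomialE !modn2 !C_odd.
case: m => [|m] Hn Hk.
  move: Hn Hk; rewrite expn0 muln1.
  by case: n => [|[|[|n]]] //; case: k => [|[|[|k]]].
have -> : 3 * 2 ^ m.+1 = 2 ^ m * 6 by rewrite expnS; lia.
have [b [s [Hs E]]] : exists x y, y < 6 /\ k = x * 6 + y.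
  by exists (k %/ 6), (k %% 6); rewrite ltn_pmod // -divn_eq.
have [a [r [Hr E']]] : exists x y, y < 6 /\ n = x * 6 + y.
  by exists (n %/ 6), (n %% 6); rewrite ltn_pmod // -divn_eq.
have P : 3 * 2 ^ m.+1 = 2 ^ m * 6 by rewrite expnS; lia.
rewrite P E E' in Hn Hk *.
have -> : a * 6 + r + 2 ^ m * 6 = (a + 2 ^ m) * 6 + r by lia.
rewrite !gE // lucas //; lia.
Qed.
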